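(* Let $a,b>0$ with $a\ne b$, and $\nu\in(0,\tfrac12)\cup(\tfrac12,1)$. Let $r=\min\{\nu,1-\nu\}$, $R=\max\{\nu,1-\nu\}$, and $$\alpha_\nu(a,b):=\left(\frac{a^{a/\nu}}{b^{b/(1-\nu)}}\cdot\frac{(a\nabla_\nu b)^{\frac{a\nabla_\nu b}{\nu(1-\nu)(2\nu-1)}}}{\big(\frac{a+b}{2}\big)^{\frac{2(a+b)}{2\nu-1}}}\right)^{\frac{1}{b-a}}.$$ Then $\alpha_\nu(a,b)\ge1$, $$\alpha_\nu(a,b)^{r}\,K(a,b)^{\widetilde r(\nu)}\le\frac{a\nabla_\nu b}{a\sharp_\nu b}\le \alpha_\nu(a,b)^{R}\,K(a,b)^{\widetilde R(\nu)},$$ and $$I_\nu(a,b)\le\frac1e\left(\frac{a^a}{b^b}\cdot\frac{\big(\frac{a+b}{2}\big)^{\frac{2(a+b)}{1-2\nu}}}{(a\nabla_\nu b)^{\frac{4(a\nabla_\nu b)}{1-2\nu}}}\right)^{\frac{1}{b-a}}.$$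
   Context: $a\nabla_\nu b:=(1-\nu)a+\nu b$, $a\sharp_\nu b:=a^{1-\nu}b^\nu$. Kantorovich constant: $K(a,b):=\frac{(a+b)^2}{4ab}$. Weighted identric mean: $$I_\nu(a,b):=\frac1e\,\big(a\nabla_\nu b\big)^{\frac{(1-2\nu)(a\nabla_\nu b)}{\nu(1-\nu)(b-a)}}\left(\frac{b^{\frac{\nu b}{1-\nu}}}{a^{\frac{(1-\nu)a}{\nu}}}\right)^{\frac{1}{b-a}}.$$ For $\lambda\in[0,1]$ let $r_1(\lambda)=\min\{\nu\lambda,1-\nu\lambda\}$, $r_2(\lambda)=\min\{(1-\nu)\lambda,1-(1-\nu)\lambda\}$, $R_1(\lambda)=\max\{\nu\lambda,1-\nu\lambda\}$, $R_2(\lambda)=\max\{(1-\nu)\lambda,1-(1-\nu)\lambda\}$, and $\widetilde r(\nu):=\int_0^1((1-\nu)r_1(\lambda)+\nu r_2(\lambda))d\lambda$, $\widetilde R(\nu):=\int_0^1((1-\nu)R_1(\lambda)+\nu R_2(\lambda))d\lambda$. *)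

(* Defs.v *)
From Stdlib Require Import Reals.
From Coquelicot Require Import Coquelicot.
Open Scope R_scope.

Definition wam (nu a b : R) : R := (1 - nu) * a + nu * b.
Definition wgm (nu a b : R) : R := Rpower a (1 - nu) * Rpower b nu.
Definition Kant (a b : R) : R := (a + b) ^ 2 / (4 * a * b).

Definition identric (nu a b : R) : R :=
  / exp 1 * Rpower (wam nu a b)
                   ((1 - 2 * nu) * wam nu a b / (nu * (1 - nu) * (b - a)))
  * Rpower (Rpower b (nu * b / (1 - nu)) / Rpower a ((1 - nu) * a / nu))
           (1 / (b - a)).

Definition r1 (nu l : R) : R := Rmin (nu * l) (1 - nu * l).
Definition r2 (nu l : R) : R := Rmin ((1 - nu) * l) (1 - (1 - nu) * l).
Definition R1 (nu l : R) : R := Rmax (nu * l) (1 - nu * l).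
Definition R2 (nu l : R) : R := Rmax ((1 - nu) * l) (1 - (1 - nu) * l).

Definition rtilde (nu : R) : R :=
  RInt (fun l => (1 - nu) * r1 nu l + nu * r2 nu l) 0 1.
Definition Rtilde (nu : R) : R :=
  RInt (fun l => (1 - nu) * R1 nu l + nu * R2 nu l) 0 1.

Definition alpha (nu a b : R) : R :=
  Rpower
    (Rpower a (a / nu) / Rpower b (b / (1 - nu))
     * (Rpower (wam nu a b) (wam nu a b / (nu * (1 - nu) * (2 * nu - 1)))
        / Rpower ((a + b) / 2) (2 * (a + b) / (2 * nu - 1))))
    (1 / (b - a)).

(* Main.v *)
Require Import Defs.
From Stdlib Require Import Reals Lra Psatz.
From Coquelicot Require Import Coquelicot.
Open Scope R_scope.


Definition Pf (a b p0 p1 p2 s : R) : R :=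
  - (p0 + p1 * s + p2 * s^2) * (b - a) / (a + s * (b - a))
  + (p1 + 2 * p2 * s) * ln (a + s * (b - a))
  - 2 * p2 * ((a + s * (b - a)) * ln (a + s * (b - a)) - (a + s * (b - a))) / (b - a).

Lemma u_pos a b s : 0 < a -> 0 < b -> 0 <= s <= 1 -> 0 < a + s * (b - a).
Proof. intros. nra. Qed.

Lemma Pf_deriv a b p0 p1 p2 s : 0 < a -> 0 < b -> a <> b -> 0 <= s <= 1 ->
  is_derive (Pf a b p0 p1 p2) s
   ((p0 + p1 * s + p2 * s^2) * (b - a)^2 / (a + s * (b - a))^2).
Proof.
  intros Ha Hb Hab Hs. pose proof (u_pos a b s Ha Hb Hs) as Hu.
  assert (Hd : b - a <> 0) by lra.
  unfold Pf. auto_derive.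
  - repeat split; lra.
  - field. split; lra.
Qed.

Lemma piece a b p0 p1 p2 s0 s1 : 0 < a -> 0 < b -> a <> b -> 0 <= s0 -> s0 <= s1 -> s1 <= 1 ->
  (forall s, s0 <= s <= s1 -> 0 <= p0 + p1 * s + p2 * s^2) ->
  Pf a b p0 p1 p2 s0 <= Pf a b p0 p1 p2 s1.
Proof.
  intros Ha Hb Hab H0 H01 H1 Hp.
  destruct (MVT_gen (Pf a b p0 p1 p2) s0 s1
     (fun s => (p0 + p1 * s + p2 * s^2) * (b - a)^2 / (a + s * (b - a))^2)) as [c [Hc Heq]].
  - intros x Hx. rewrite Rmin_left in Hx by lra. rewrite Rmax_right in Hx by lra.
    apply Pf_deriv; auto; lra.
  - intros x Hx. rewrite Rmin_left in Hx by lra. rewrite Rmax_right in Hx by lra.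
    assert (Hc : continuous (Pf a b p0 p1 p2) x).
    { apply (@ex_derive_continuous R_AbsRing R_NormedModule). eexists. apply Pf_deriv; auto; lra. }
    apply continuity_pt_filterlim. exact Hc.
  - rewrite Rmin_left in Hc by lra. rewrite Rmax_right in Hc by lra.
    assert (0 <= (p0 + p1 * c + p2 * c^2) * (b - a)^2 / (a + c * (b - a))^2).
    { pose proof (u_pos a b c Ha Hb ltac:(lra)). apply Rmult_le_pos.
      apply Rmult_le_pos. apply Hp; lra. apply pow2_ge_0.
      apply Rlt_le, Rinv_0_lt_compat. apply pow_lt; lra. }
    nra.
Qed.
Lemma form_nonneg s0 s1 s al be ga de ep : s0 <= s <= s1 ->
  0 <= al -> 0 <= be -> 0 <= ga -> 0 <= de -> 0 <= ep ->
  0 <= al*(s1-s) + be*(s-s0) + ga*((s-s0)*(s1-s)) + de*((s-s0)*(s-s0)) + ep*((s1-s)*(s1-s)).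
Proof.
  intros Hs ? ? ? ? ?.
  assert (0 <= (s-s0)*(s1-s)) by nra.
  assert (0 <= (s-s0)*(s-s0)) by nra.
  assert (0 <= (s1-s)*(s1-s)) by nra.
  assert (0 <= al*(s1-s)) by nra. assert (0 <= be*(s-s0)) by nra.
  assert (0 <= ga*((s-s0)*(s1-s))) by nra.
  assert (0 <= de*((s-s0)*(s-s0))) by nra. assert (0 <= ep*((s1-s)*(s1-s))) by nra.
  lra.
Qed.

Definition tt n := n*(3-4*n)/(4*(1-n)).
Definition w2 n := (3-2*n)/((1-n)*(1-2*n)).
Definition v20 n := n/2 - n - w2 n * n^2/2.
Definition v21 n := 1 + w2 n * n.
Definition v22 n := - w2 n / 2.

Definition lo10 (n:R) := 0. Definition lo11 n := 1-n-tt n. Definition lo12 (n:R) := -1/2.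
Definition lo20 n := n - n*v20 n. Definition lo21 n := -n - n*v21 n - tt n. Definition lo22 n := -n*v22 n.
Definition lo30 n := n - tt n - n/(2*(1-n)). Definition lo31 n := -n + tt n + n/(1-n). Definition lo32 n := -n/(2*(1-n)).
Definition up10 (n:R) := 0. Definition up11 n := n - tt n. Definition up12 n := (1-n)/(2*n).
Definition up20 n := (1-n)*v20 n - n. Definition up21 n := (1-n)*v21 n + 1 - tt n + n. Definition up22 n := (1-n)*v22 n.
Definition up30 n := 3/2 - tt n - n. Definition up31 n := -2 + tt n + n. Definition up32 (n:R) := 1/2.

Lemma nonneg_via p0 p1 p2 s0 s1 al be ga de ep :
  0 <= al -> 0 <= be -> 0 <= ga -> 0 <= de -> 0 <= ep ->
  (forall s, p0 + p1*s + p2*s^2 = al*(s1-s) + be*(s-s0) + ga*((s-s0)*(s1-s)) + de*((s-s0)*(s-s0)) + ep*((s1-s)*(s1-s))) ->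
  forall s, s0 <= s <= s1 -> 0 <= p0 + p1*s + p2*s^2.
Proof. intros ? ? ? ? ? E s Hs. rewrite E. apply form_nonneg; auto. Qed.

Lemma divpos x y : 0 <= x -> 0 < y -> 0 <= x / y.
Proof. intros. unfold Rdiv. apply Rmult_le_pos; auto. apply Rlt_le, Rinv_0_lt_compat; auto. Qed.

Lemma divle x y c : 0 < y -> x <= c * y -> x / y <= c.
Proof. intros. apply Rmult_le_reg_r with y; auto. unfold Rdiv. rewrite Rmult_assoc, Rinv_l; lra. Qed.

Section S3.
Variable n : R.
Hypothesis Hn : 0 < n < 1/2.
Ltac fs := intro s; unfold
  lo10,lo11,lo12,lo20,lo21,lo22,lo30,lo31,lo32,
  up10,up11,up12,up20,up21,up22,up30,up31,up32, v20, v21, v22, tt, w2; field; repeat split; intro; nra.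

Lemma v1_nn : forall s, 0 <= s <= n -> 0 <= 0 + 0*s + 1/(2*n)*s^2.
Proof. apply (nonneg_via _ _ _ 0 n 0 0 0 (1/(2*n)) 0); try lra. apply divpos; lra. fs. Qed.
Lemma v2_nn : forall s, n <= s <= 1/2 -> 0 <= v20 n + v21 n*s + v22 n*s^2.
Proof. apply (nonneg_via _ _ _ n (1/2) (n/(1-2*n)) (1/(4*(1-n)*(1-2*n))) (w2 n/2) 0 0); try lra.
  apply divpos; lra. apply divpos; [lra|]. assert (0 < (1-n)*(1-2*n)) by nra. nra.
  unfold w2. apply divpos; [|lra]. apply divpos; [lra|]. nra. fs. Qed.
Lemma v3_nn : forall s, 1/2 <= s <= 1 -> 0 <= 1/(2*(1-n)) + -1/(1-n)*s + 1/(2*(1-n))*s^2.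
Proof. apply (nonneg_via _ _ _ (1/2) 1 0 0 0 0 (1/(2*(1-n)))); try lra. apply divpos; lra. fs. Qed.

Lemma lo1_nn : forall s, 0 <= s <= n -> 0 <= lo10 n + lo11 n*s + lo12 n*s^2.
Proof. apply (nonneg_via _ _ _ 0 n 0 ((2*n-1)*(5*n-4)/(4*(1-n))) (1/2) 0 0); try lra.
  apply divpos; nra. fs. Qed.
Lemma lo2_nn : forall s, n <= s <= 1/2 -> 0 <= lo20 n + lo21 n*s + lo22 n*s^2.
Proof. apply (nonneg_via _ _ _ n (1/2) (n*(5-8*n)/(4*(1-n))) 0 0 0 (n*w2 n/2)); try lra.
  apply divpos; nra. unfold w2. apply divpos; [|lra]. apply Rmult_le_pos; [lra|].
  apply divpos; [lra|]. nra. fs. Qed.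
Lemma lo3_nn : forall s, 1/2 <= s <= 1 -> 0 <= lo30 n + lo31 n*s + lo32 n*s^2.
Proof. apply (nonneg_via _ _ _ (1/2) 1 0 0 (n/(2*(1-n))) 0 0); try lra. apply divpos; lra. fs. Qed.

Lemma up1_nn : forall s, 0 <= s <= n -> 0 <= up10 n + up11 n*s + up12 n*s^2.
Proof. apply (nonneg_via _ _ _ 0 n 0 (n/(4*(1-n))) 0 ((1-n)/(2*n)) 0); try lra.
  apply divpos; lra. apply divpos; lra. fs. Qed.
Lemma up2_nn : forall s, n <= s <= 1/2 -> 0 <= up20 n + up21 n*s + up22 n*s^2.
Proof. apply (nonneg_via _ _ _ n (1/2) (n*(n - tt n + (1-n)/2)/(1/2-n))
   ((1/2)*(1/4+1-tt n-n)/(1/2-n)) ((1-n)*w2 n/2) 0 0); try lra.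
  apply divpos; [|lra]. apply Rmult_le_pos; [lra|]. unfold tt.
  assert (n*(3-4*n)/(4*(1-n)) = n - n/(4*(1-n))) by (field; lra).
  rewrite H. assert (0 <= n/(4*(1-n))) by (apply divpos; lra). lra.
  apply divpos; [|lra]. apply Rmult_le_pos; [lra|]. unfold tt.
  assert (n*(3-4*n)/(4*(1-n)) = n - n/(4*(1-n))) by (field; lra).
  rewrite H. assert (0 <= n/(4*(1-n))) by (apply divpos; lra). lra.
  unfold w2. apply divpos; [|lra]. apply Rmult_le_pos; [lra|].
  apply divpos; [lra|]. nra. fs. Qed.
Lemma up3_nn : forall s, 1/2 <= s <= 1 -> 0 <= up30 n + up31 n*s + up32 n*s^2.
Proof. apply (nonneg_via _ _ _ (1/2) 1 (1 - tt n - n) 0 0 0 (1/2)); try lra.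
  unfold tt. assert (n*(3-4*n)/(4*(1-n)) = n - n/(4*(1-n))) by (field; lra).
  rewrite H. assert (0 <= n/(4*(1-n))) by (apply divpos; lra). lra.
  fs. Qed.
End S3.
Lemma poly_int (c0 c1 lo hi : R) :
  is_RInt (fun x => c0 + c1 * x) lo hi ((c0*hi + c1/2*hi^2) - (c0*lo + c1/2*lo^2)).
Proof.
  assert (E: (c0*hi + c1/2*hi^2) - (c0*lo + c1/2*lo^2) =
     minus (c0*hi + c1/2*hi^2) (c0*lo + c1/2*lo^2)) by reflexivity.
  rewrite E.
  apply (is_RInt_derive (fun x => c0*x + c1/2*x^2) (fun x => c0 + c1 * x)).
  - intros x _. auto_derive; auto. field.
  - intros x _. apply (@ex_derive_continuous R_AbsRing R_NormedModule).
    auto_derive; auto.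
Qed.

Lemma rtilde_lo n : 0 < n < 1/2 -> rtilde n = tt n /\ Rtilde n = 1 - tt n.
Proof.
  intros Hn. set (c := 1/(2*(1-n))).
  assert (Hc : 0 < c < 1). { unfold c. split. apply Rdiv_lt_0_compat; lra.
     apply Rmult_lt_reg_r with (2*(1-n)). lra. unfold Rdiv. rewrite Rmult_assoc, Rinv_l; lra. }
  assert (Hc2 : (1-n)*c = 1/2) by (unfold c; field; lra).
  split.
  - unfold rtilde. apply is_RInt_unique.
    assert (H1 := poly_int 0 (2*n*(1-n)) 0 c).
    assert (H2 := poly_int n 0 c 1).
    assert (E1 : forall x, Rmin 0 c < x < Rmax 0 c -> (fun x => 0 + 2 * n * (1 - n) * x) x = (fun l => (1 - n) * r1 n l + n * r2 n l) x).
    { intros x Hx. rewrite Rmin_left in Hx by lra. rewrite Rmax_right in Hx by lra.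
      unfold r1, r2. rewrite Rmin_left by nra. rewrite Rmin_left by nra. ring. }
    assert (E2 : forall x, Rmin c 1 < x < Rmax c 1 -> (fun x => n + 0 * x) x = (fun l => (1 - n) * r1 n l + n * r2 n l) x).
    { intros x Hx. rewrite Rmin_left in Hx by lra. rewrite Rmax_right in Hx by lra.
      unfold r1, r2. rewrite Rmin_left by nra. rewrite Rmin_right by nra. ring. }
    assert (H := is_RInt_Chasles _ _ _ _ _ _
      (is_RInt_ext _ (fun l => (1 - n) * r1 n l + n * r2 n l) _ _ _ E1 H1)
      (is_RInt_ext _ (fun l => (1 - n) * r1 n l + n * r2 n l) _ _ _ E2 H2)).
    replace (tt n) with (plus (0 * c + 2 * n * (1 - n) / 2 * c ^ 2 - (0 * 0 + 2 * n * (1 - n) / 2 * 0 ^ 2))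
          (n * 1 + 0 / 2 * 1 ^ 2 - (n * c + 0 / 2 * c ^ 2))). exact H.
    unfold plus; simpl. unfold tt. unfold c. field. lra.
  - unfold Rtilde. apply is_RInt_unique.
    assert (H1 := poly_int 1 (-2*n*(1-n)) 0 c).
    assert (H2 := poly_int (1-n) 0 c 1).
    assert (E1 : forall x, Rmin 0 c < x < Rmax 0 c -> (fun x => 1 + -2 * n * (1 - n) * x) x = (fun l => (1 - n) * Defs.R1 n l + n * Defs.R2 n l) x).
    { intros x Hx. rewrite Rmin_left in Hx by lra. rewrite Rmax_right in Hx by lra.
      unfold Defs.R1, Defs.R2. rewrite Rmax_right by nra. rewrite Rmax_right by nra. ring. }
    assert (E2 : forall x, Rmin c 1 < x < Rmax c 1 -> (fun x => (1-n) + 0 * x) x = (fun l => (1 - n) * Defs.R1 n l + n * Defs.R2 n l) x).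
    { intros x Hx. rewrite Rmin_left in Hx by lra. rewrite Rmax_right in Hx by lra.
      unfold Defs.R1, Defs.R2. rewrite Rmax_right by nra. rewrite Rmax_left by nra. ring. }
    assert (H := is_RInt_Chasles _ _ _ _ _ _
      (is_RInt_ext _ (fun l => (1 - n) * Defs.R1 n l + n * Defs.R2 n l) _ _ _ E1 H1)
      (is_RInt_ext _ (fun l => (1 - n) * Defs.R1 n l + n * Defs.R2 n l) _ _ _ E2 H2)).
    replace (1 - tt n) with (plus (1 * c + -2 * n * (1 - n) / 2 * c ^ 2 - (1 * 0 + -2 * n * (1 - n) / 2 * 0 ^ 2))
          ((1-n) * 1 + 0 / 2 * 1 ^ 2 - ((1-n) * c + 0 / 2 * c ^ 2))). exact H.
    unfold plus; simpl. unfold tt. unfold c. field. lra.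
Qed.

Definition XX nu a b := ((a/nu)*ln a - (b/(1-nu))*ln b
   + (wam nu a b)/(nu*(1-nu)*(2*nu-1))*ln (wam nu a b)
   - 2*(a+b)/(2*nu-1)*ln ((a+b)/2))/(b-a).
Definition LL nu a b := ln (wam nu a b) - (1-nu)*ln a - nu*ln b.
Definition KK a b := 2*ln ((a+b)/2) - ln a - ln b.

Lemma u0 a b : a + 0 * (b - a) = a. Proof. ring. Qed.
Lemma un a b n : a + n * (b - a) = wam n a b. Proof. unfold wam; ring. Qed.
Lemma uh a b : a + 1/2 * (b - a) = (a+b)/2. Proof. field. Qed.
Lemma u1 a b : a + 1 * (b - a) = b. Proof. ring. Qed.

Lemma wam_pos n a b : 0 < a -> 0 < b -> 0 < n < 1 -> 0 < wam n a b.
Proof. intros. unfold wam. nra. Qed.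

Lemma core n a b : 0 < a -> 0 < b -> a <> b -> 0 < n < 1/2 ->
  0 <= XX n a b /\ n * XX n a b + tt n * KK a b <= LL n a b /\
  LL n a b <= (1-n) * XX n a b + (1 - tt n) * KK a b.
Proof.
  intros Ha Hb Hab Hn.
  assert (Hd : b - a <> 0) by lra.
  assert (HA := wam_pos n a b Ha Hb ltac:(lra)).
  assert (Hn0 : n <> 0) by lra. assert (Hn1 : 1 - n <> 0) by lra.
  assert (Hn2 : 2*n - 1 <> 0) by lra. assert (Hn3 : 1 - 2*n <> 0) by lra.
  assert (Hab2 : a + b <> 0) by lra.
  assert (HA0 : wam n a b <> 0) by lra.
  repeat split.
  - assert (E : Pf a b 0 0 (1/(2*n)) n - Pf a b 0 0 (1/(2*n)) 0
      + (Pf a b (v20 n) (v21 n) (v22 n) (1/2) - Pf a b (v20 n) (v21 n) (v22 n) n)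
      + (Pf a b (1/(2*(1-n))) (-1/(1-n)) (1/(2*(1-n))) 1 - Pf a b (1/(2*(1-n))) (-1/(1-n)) (1/(2*(1-n))) (1/2))
      = XX n a b).
    { unfold Pf. rewrite u0, (un a b n), (uh a b), u1.
      unfold XX, v20, v21, v22, w2. unfold wam in *; field; repeat split; try assumption; intro; nra. }
    rewrite <- E.
    assert (P1 := piece a b _ _ _ 0 n Ha Hb Hab ltac:(lra) ltac:(lra) ltac:(lra) (v1_nn n Hn)).
    assert (P2 := piece a b _ _ _ n (1/2) Ha Hb Hab ltac:(lra) ltac:(lra) ltac:(lra) (v2_nn n Hn)).
    assert (P3 := piece a b _ _ _ (1/2) 1 Ha Hb Hab ltac:(lra) ltac:(lra) ltac:(lra) (v3_nn n Hn)).
    lra.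
  - assert (E : Pf a b (lo10 n) (lo11 n) (lo12 n) n - Pf a b (lo10 n) (lo11 n) (lo12 n) 0
      + (Pf a b (lo20 n) (lo21 n) (lo22 n) (1/2) - Pf a b (lo20 n) (lo21 n) (lo22 n) n)
      + (Pf a b (lo30 n) (lo31 n) (lo32 n) 1 - Pf a b (lo30 n) (lo31 n) (lo32 n) (1/2))
      = LL n a b - n * XX n a b - tt n * KK a b).
    { unfold Pf. rewrite u0, (un a b n), (uh a b), u1.
      unfold XX, LL, KK, lo10,lo11,lo12,lo20,lo21,lo22,lo30,lo31,lo32, v20, v21, v22, tt, w2.
      unfold wam in *; field; repeat split; try assumption; intro; nra. }
    assert (P1 := piece a b _ _ _ 0 n Ha Hb Hab ltac:(lra) ltac:(lra) ltac:(lra) (lo1_nn n Hn)).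
    assert (P2 := piece a b _ _ _ n (1/2) Ha Hb Hab ltac:(lra) ltac:(lra) ltac:(lra) (lo2_nn n Hn)).
    assert (P3 := piece a b _ _ _ (1/2) 1 Ha Hb Hab ltac:(lra) ltac:(lra) ltac:(lra) (lo3_nn n Hn)).
    lra.
  - assert (E : Pf a b (up10 n) (up11 n) (up12 n) n - Pf a b (up10 n) (up11 n) (up12 n) 0
      + (Pf a b (up20 n) (up21 n) (up22 n) (1/2) - Pf a b (up20 n) (up21 n) (up22 n) n)
      + (Pf a b (up30 n) (up31 n) (up32 n) 1 - Pf a b (up30 n) (up31 n) (up32 n) (1/2))
      = (1-n) * XX n a b + (1 - tt n) * KK a b - LL n a b).
    { unfold Pf. rewrite u0, (un a b n), (uh a b), u1.
      unfold XX, LL, KK, up10,up11,up12,up20,up21,up22,up30,up31,up32, v20, v21, v22, tt, w2.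
      unfold wam in *; field; repeat split; try assumption; intro; nra. }
    assert (P1 := piece a b _ _ _ 0 n Ha Hb Hab ltac:(lra) ltac:(lra) ltac:(lra) (up1_nn n Hn)).
    assert (P2 := piece a b _ _ _ n (1/2) Ha Hb Hab ltac:(lra) ltac:(lra) ltac:(lra) (up2_nn n Hn)).
    assert (P3 := piece a b _ _ _ (1/2) 1 Ha Hb Hab ltac:(lra) ltac:(lra) ltac:(lra) (up3_nn n Hn)).
    lra.
Qed.

Lemma XX_sym n a b : a <> b -> 0 < n < 1 -> n <> 1/2 -> XX (1-n) b a = XX n a b.
Proof.
  intros Hab Hn Hh. unfold XX.
  replace (wam (1-n) b a) with (wam n a b) by (unfold wam; ring).
  replace ((b+a)/2) with ((a+b)/2) by field.
  assert (b - a <> 0) by lra. assert (a - b <> 0) by lra.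
  assert (n <> 0) by lra. assert (1-n <> 0) by lra. assert (2*n-1 <> 0) by lra.
  assert (2*(1-n)-1 <> 0) by lra. assert (1-(1-n) <> 0) by lra.
  field. repeat split; assumption.
Qed.
Lemma LL_sym n a b : LL (1-n) b a = LL n a b.
Proof. unfold LL. replace (wam (1-n) b a) with (wam n a b) by (unfold wam; ring). ring. Qed.
Lemma KK_sym a b : KK b a = KK a b.
Proof. unfold KK. replace ((b+a)/2) with ((a+b)/2) by field. ring. Qed.
Lemma rtilde_sym n : rtilde n = rtilde (1-n).
Proof. unfold rtilde.
  assert (H : forall x, (1 - n) * r1 n x + n * r2 n x = (1 - (1 - n)) * r1 (1 - n) x + (1 - n) * r2 (1 - n) x).
  { intros x. unfold r1, r2. replace (1-(1-n)) with n by ring. ring. }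
  apply RInt_ext. intros x _. apply H. Qed.
Lemma Rtilde_sym n : Rtilde n = Rtilde (1-n).
Proof. unfold Rtilde.
  assert (H : forall x, (1 - n) * Defs.R1 n x + n * Defs.R2 n x = (1 - (1 - n)) * Defs.R1 (1 - n) x + (1 - n) * Defs.R2 (1 - n) x).
  { intros x. unfold Defs.R1, Defs.R2. replace (1-(1-n)) with n by ring. ring. }
  apply RInt_ext. intros x _. apply H. Qed.

Lemma ediv x y : exp x / exp y = exp (x - y).
Proof. unfold Rminus. rewrite exp_plus, exp_Ropp. reflexivity. Qed.
Lemma exp_le x y : x <= y -> exp x <= exp y.
Proof. intros [H|H]. left; apply exp_increasing; auto. subst; lra. Qed.

Lemma alpha_exp nu a b : a <> b -> 0 < nu < 1 -> nu <> 1/2 ->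
  alpha nu a b = exp (XX nu a b).
Proof.
  intros Hab Hn Hh. unfold alpha, Rpower. rewrite !ediv, <- exp_plus, ln_exp.
  f_equal. unfold XX.
  assert (b - a <> 0) by lra.
  assert (nu <> 0) by lra. assert (1-nu <> 0) by lra. assert (2*nu-1 <> 0) by lra.
  field. repeat split; assumption.
Qed.

Lemma ratio_exp nu a b : 0 < a -> 0 < b -> 0 < nu < 1 ->
  wam nu a b / wgm nu a b = exp (LL nu a b).
Proof.
  intros Ha Hb Hn. assert (HA := wam_pos nu a b Ha Hb Hn).
  unfold wgm, Rpower. rewrite <- (exp_ln (wam nu a b) HA) at 1.
  rewrite <- exp_plus, ediv. f_equal. unfold LL. ring.
Qed.

Lemma Kant_exp a b : 0 < a -> 0 < b -> Kant a b = exp (KK a b).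
Proof.
  intros Ha Hb. unfold KK.
  replace (2 * ln ((a + b) / 2) - ln a - ln b) with
    ((ln ((a + b) / 2) + ln ((a + b) / 2)) - (ln a + ln b)) by ring.
  rewrite <- ediv, !exp_plus, !exp_ln by lra.
  unfold Kant. field. lra.
Qed.

Theorem mainTheorem14 (a b nu : R) :
  0 < a -> 0 < b -> a <> b -> 0 < nu < 1 -> nu <> 1 / 2 ->
  let r := Rmin nu (1 - nu) in
  let Rm := Rmax nu (1 - nu) in
  1 <= alpha nu a b /\
  Rpower (alpha nu a b) r * Rpower (Kant a b) (rtilde nu)
    <= wam nu a b / wgm nu a b /\
  wam nu a b / wgm nu a b
    <= Rpower (alpha nu a b) Rm * Rpower (Kant a b) (Rtilde nu) /\
  identric nu a b <=
    / exp 1 *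
    Rpower
      (Rpower a a / Rpower b b
       * (Rpower ((a + b) / 2) (2 * (a + b) / (1 - 2 * nu))
          / Rpower (wam nu a b) (4 * wam nu a b / (1 - 2 * nu))))
      (1 / (b - a)).
Proof.
  intros Ha Hb Hab Hn Hh r Rm.
  assert (HC : 0 <= XX nu a b /\ r * XX nu a b + rtilde nu * KK a b <= LL nu a b /\
     LL nu a b <= Rm * XX nu a b + Rtilde nu * KK a b).
  { destruct (Rlt_or_le nu (1/2)) as [Hl|Hl].
    - destruct (core nu a b Ha Hb Hab ltac:(lra)) as [C1 [C2 C3]].
      destruct (rtilde_lo nu ltac:(lra)) as [E1 E2].
      unfold r, Rm. rewrite Rmin_left by lra. rewrite Rmax_right by lra.
      rewrite E1, E2. auto.
    - destruct (core (1-nu) b a Hb Ha (not_eq_sym Hab) ltac:(lra)) as [C1 [C2 C3]].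
      destruct (rtilde_lo (1-nu) ltac:(lra)) as [E1 E2].
      rewrite XX_sym in C1, C2, C3 by lra. rewrite LL_sym in C2, C3. rewrite (KK_sym a b) in C2, C3.
      unfold r, Rm. rewrite Rmin_right by lra. rewrite Rmax_left by lra.
      rewrite rtilde_sym, Rtilde_sym, E1, E2.
      replace (1 - (1 - nu)) with nu in C3 by ring. auto. }
  destruct HC as [C1 [C2 C3]].
  rewrite alpha_exp, ratio_exp, Kant_exp by assumption.
  unfold Rpower. rewrite !ln_exp, <- !exp_plus.
  repeat split.
  - rewrite <- exp_0. apply exp_le. exact C1.
  - apply exp_le. lra.
  - apply exp_le. lra.
  - unfold identric, Rpower. rewrite !ediv, <- !exp_plus, !ln_exp.
    rewrite !Rmult_assoc, <- !exp_plus.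
    apply Rmult_le_compat_l. left; apply Rinv_0_lt_compat, exp_pos.
    apply exp_le.
    assert (b - a <> 0) by lra.
    assert (nu <> 0) by lra. assert (1-nu <> 0) by lra. assert (2*nu-1 <> 0) by lra.
    assert (1-2*nu <> 0) by lra.
    match goal with |- ?L <= ?R =>
      replace R with (L + XX nu a b) by (unfold XX; field; repeat split; assumption) end.
    lra.
Qed.
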